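(* Let $G$ be a cyclically $4$-edge-connected cubic graph with a distinguished edge $e$ that is not contained in any cyclic $4$-edge-cut of $G$. Suppose that for every cyclic $4$-edge-cut $E(A,B)$ of $G$ with $e$ an edge of $G[A]$, the set $B$ is not solid. Then for every such cut, $G[B]$ is a twisted net.
   Context: An edge-cut $E(A,B)$ is a $k$-edge-cut if it has exactly $k$ edges, cyclic if both $G[A]$ and $G[B]$ contain a cycle; $G$ is cyclically $4$-edge-connected if it has no cyclic edge-cut with fewer than four edges. For a cyclic $4$-edge-cut $E(A,B)$, $B$ is solid if there is no partition of $B$ into two parts, each with at least two vertices, joined by exactly two edges of $G[B]$. In a graph with all degrees $2$ or $3$, the degree-two vertices are corners; for a graph consisting of a single edge, both its ends are corners. Twisted nets are defined inductively: a $4$-cycle is a twisted net; if $T$ is a twisted net and $H$ is (disjoint from $T$) either a twisted net or a single edge, then the graph obtained from $T\cup H$ by adding edges $uv$ and $u'v'$, where $u\neq u'$ are corners of $T$ and $v\ne v'$ are corners of $H$, is a twisted net. *)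

(* Defs.v *)
From mathcomp Require Import all_boot.
Set Implicit Arguments. Unset Strict Implicit. Unset Printing Implicit Defensive.

Section Graph.
Variables (V : finType) (adj : rel V).

Definition simple_graph : Prop := symmetric adj /\ irreflexive adj.

Definition deg_in (S : {set V}) (x : V) : nat := #|[set y in S | adj x y]|.

Definition cubic : Prop := forall x : V, deg_in [set: V] x = 3.

(* number of edges of G joining S1 to S2 (for disjoint S1, S2, each edge counted once) *)
Definition n_edges_between (S1 S2 : {set V}) : nat :=
  #|[set p : V * V | [&& p.1 \in S1, p.2 \in S2 & adj p.1 p.2]]|.

Definition has_cycle_in (S : {set V}) : Prop :=
  exists s : seq V, [/\ 2 < size s, uniq s, {subset s <= S} & cycle adj s].

Definition is_kcut (k : nat) (A : {set V}) : Prop := n_edges_between A (~: A) = k.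

Definition cyclic_cut (A : {set V}) : Prop := has_cycle_in A /\ has_cycle_in (~: A).

Definition cyclic_kcut (k : nat) (A : {set V}) : Prop := is_kcut k A /\ cyclic_cut A.

Definition cyclically_4_edge_connected : Prop :=
  forall (A : {set V}) (k : nat), k < 4 -> ~ cyclic_kcut k A.

Definition solid (B : {set V}) : Prop :=
  ~ exists B1 B2 : {set V},
      [/\ B1 :|: B2 = B, [disjoint B1 & B2], 2 <= #|B1|, 2 <= #|B2|
        & n_edges_between B1 B2 = 2].

Definition corner (S : {set V}) (x : V) : bool := (x \in S) && (deg_in S x == 2).

Definition single_edge (S : {set V}) : Prop :=
  exists a b, adj a b /\ S = [set a; b].

(* G[S] is a twisted net (defined inductively on induced subgraphs of G;
   every graph arising in the inductive construction is an induced subgraph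
   of the result, so this matches the paper's definition up to isomorphism). *)
Inductive twisted_net : {set V} -> Prop :=
| TN_cycle (S : {set V}) :
    #|S| = 4 -> (forall x, x \in S -> deg_in S x = 2) -> twisted_net S
| TN_join (T H : {set V}) (u u' v v' : V) :
    twisted_net T ->
    (twisted_net H /\ corner H v /\ corner H v') \/ single_edge H ->
    [disjoint T & H] ->
    corner T u -> corner T u' -> u != u' ->
    v \in H -> v' \in H -> v != v' ->
    (forall a b, a \in T -> b \in H ->
       adj a b = ((a == u) && (b == v)) || ((a == u') && (b == v'))) ->
    twisted_net (T :|: H).

End Graph.

(* Main.v *)
Require Import Defs.
From mathcomp Require Import all_boot.
From Stdlib Require Import Lia Classical.
Set Implicit Arguments. Unset Strict Implicit. Unset Printing Implicit Defensive.


Definition nb (V : finType) (adj : rel V) (S1 S2 : {set V}) : nat :=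
  \sum_(a in S1) deg_in adj S2 a.

Lemma deg_sum (V : finType) (adj : rel V) (S : {set V}) a :
  deg_in adj S a = \sum_(b in S) (adj a b : nat).
Proof.
rewrite /deg_in -sum1dep_card big_mkcondr /=.
by apply: eq_bigr => b _; case: (adj a b).
Qed.

Lemma neb_nb (V : finType) (adj : rel V) (S1 S2 : {set V}) :
  n_edges_between adj S1 S2 = nb adj S1 S2.
Proof.
rewrite /n_edges_between -sum1dep_card /nb.
rewrite -(pair_big_dep (fun a => a \in S1) (fun a b => (b \in S2) && adj a b) (fun _ _ => 1)) /=.
apply: eq_bigr => a _; rewrite /deg_in -sum1dep_card //.
Qed.

Lemma degU (V : finType) (adj : rel V) (X Y : {set V}) a : [disjoint X & Y] ->
  deg_in adj (X :|: Y) a = deg_in adj X a + deg_in adj Y a.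
Proof.
move=> d; rewrite !deg_sum -bigU //; apply: eq_bigl => b; by rewrite !inE.
Qed.

Lemma nbUl (V : finType) (adj : rel V) (X Y S : {set V}) : [disjoint X & Y] ->
  nb adj (X :|: Y) S = nb adj X S + nb adj Y S.
Proof.
move=> d; rewrite /nb -bigU //; apply: eq_bigl => b; by rewrite !inE.
Qed.

Lemma nbUr (V : finType) (adj : rel V) (X Y S : {set V}) : [disjoint X & Y] ->
  nb adj S (X :|: Y) = nb adj S X + nb adj S Y.
Proof.
move=> d; rewrite /nb -big_split /=; apply: eq_bigr => a _; exact: degU.
Qed.

Lemma nb_sym (V : finType) (adj : rel V) (X Y : {set V}) : symmetric adj ->
  nb adj X Y = nb adj Y X.
Proof.
move=> sy; rewrite /nb.
under eq_bigr do rewrite deg_sum.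
under [RHS]eq_bigr do rewrite deg_sum.
rewrite exchange_big /=; apply: eq_bigr => b _; apply: eq_bigr => a _.
by rewrite sy.
Qed.

Lemma nb1 (V : finType) (adj : rel V) w (S : {set V}) : nb adj [set w] S = deg_in adj S w.
Proof. by rewrite /nb big_set1. Qed.

Lemma nbT (V : finType) (adj : rel V) (S : {set V}) : cubic adj -> nb adj S setT = 3 * #|S|.
Proof. move=> c; rewrite /nb; under eq_bigr do rewrite c; by rewrite sum_nat_const mulnC. Qed.

Lemma nbI (V : finType) (adj : rel V) (S : {set V}) : cubic adj ->
  nb adj S S + nb adj S (~: S) = 3 * #|S|.
Proof. move=> c; rewrite -nbUr ?setUCr ?nbT //; by rewrite disjoints_subset setCK. Qed.


Lemma cyc_sub (V : finType) (adj : rel V) (S S' : {set V}) :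
  S \subset S' -> has_cycle_in adj S -> has_cycle_in adj S'.
Proof.
move=> sub [s [h1 h2 h3 h4]]; exists s; split=> // z zs.
exact: (subsetP sub _ (h3 _ zs)).
Qed.

Lemma cyc_close (V : finType) (adj : rel V) (S : {set V}) :
  symmetric adj -> irreflexive adj ->
  forall l r, 2 <= deg_in adj S l -> uniq (l :: r) ->
    {subset l :: r <= S} -> path adj l r ->
    (forall z, z \in S -> adj l z -> z \in l :: r) -> has_cycle_in adj S.
Proof.
move=> sy ir l r cN hu hs hp nz.
set N := [set z in S | adj l z].
have hN : forall z, z \in N -> z \in r.
  move=> z; rewrite inE => /andP [zS lz]; move: (nz z zS lz); rewrite inE.
  case/orP=> // /eqP zl; by rewrite zl ir in lz.
move: hu hs hp hN nz; case: r => [|h r''] hu hs hp hN nz.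
  have : 0 < #|N| by apply: leq_trans cN.
  by case/card_gt0P => z /hN.
have : 0 < #|N :\ h|.
  move: cN; rewrite /deg_in -/N (cardsD1 h N).
  case: (h \in N) => /=; [rewrite add1n ltnS | move=> h2; exact: leq_trans h2] => //.

case/card_gt0P => w; rewrite !inE => /andP [wh /andP [wS lw]].
have : w \in h :: r'' by apply: hN; rewrite inE wS lw.
rewrite inE (negbTE wh) /= => wr.
case/splitPr: wr hu hs hp => p1 p2 hu hs hp.
exists (l :: h :: rcons p1 w); split.
- by rewrite /= size_rcons.
- apply: (subseq_uniq _ hu); rewrite -cat_rcons -!cat_cons; exact: prefix_subseq.
- move=> t ti; apply: hs; move: ti; rewrite -cat_rcons -!cat_cons => ti.
  by rewrite mem_cat ti.
- rewrite /= rcons_path; move: hp; rewrite -cat_cons cat_path => /andP [hp1 hp2].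
  rewrite last_rcons rcons_path; move: hp1 hp2 => /= /andP [-> ->] /andP [-> _] /=; by rewrite sy lw.
Qed.

Lemma cyc_ext (V : finType) (adj : rel V) (S : {set V}) :
  symmetric adj -> irreflexive adj ->
  (forall z, z \in S -> 2 <= deg_in adj S z) ->
  forall n l r, #|S| <= n + size (l :: r) -> uniq (l :: r) ->
    {subset l :: r <= S} -> path adj l r -> has_cycle_in adj S.
Proof.
move=> sy ir dg; elim=> [|n IH] l r hc hu hs hp.
all: have lS : l \in S by apply: hs; rewrite inE eqxx.
all: case: (boolP [exists z, [&& z \in S, adj l z & z \notin l :: r]]); last first.
1,3: move=> /existsPn nz; apply: (cyc_close sy ir (dg _ lS) hu hs hp) => z zS lz;
     by move: (nz z); rewrite zS lz /= negbK.
all: case/existsP=> z /and3P [zS lz zn].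
- have u : uniq (z :: l :: r) by apply/andP.
  have h2 : size (z :: l :: r) <= #|S|.
    move/card_uniqP: u => <-.
    apply/subset_leq_card/subsetP => t; rewrite inE => /orP [/eqP -> //|]; exact: hs.
  by have := leq_trans h2 hc; rewrite add0n ltnn.
- apply: (IH z (l :: r)).
  + by move: hc; rewrite /= addSnnS.
  + by apply/andP.
  + move=> t; rewrite inE => /orP [/eqP -> //|]; exact: hs.
  + by rewrite /= sy lz hp.
Qed.

Lemma cyc_mindeg (V : finType) (adj : rel V) (S : {set V}) x0 :
  symmetric adj -> irreflexive adj -> x0 \in S ->
  (forall z, z \in S -> 2 <= deg_in adj S z) -> has_cycle_in adj S.
Proof.
move=> sy ir x0S dg; apply: (cyc_ext sy ir dg (n := #|S|) (l := x0) (r := [::])) => //.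
- by rewrite leq_addr.
- by move=> t; rewrite inE => /eqP ->.
Qed.

(* a vertex with <= 1 neighbour in T lies on no cycle of T *)
Lemma cyc_avoid (V : finType) (adj : rel V) (T : {set V}) u :
  symmetric adj -> has_cycle_in adj T -> deg_in adj T u <= 1 ->
  has_cycle_in adj (T :\ u).
Proof.
move=> sy [s [h1 h2 h3 h4]].
case: (boolP (u \in s)) => us; last first.
  move=> _; exists s; split=> // z zs; rewrite !inE h3 // andbT.
  by apply: contraNneq us => <-.
set i := index u s.
have hr : rot i s = u :: (drop i.+1 s ++ take i s).
  by rewrite /rot (drop_nth u) ?index_mem // nth_index.
have hc : cycle adj (u :: (drop i.+1 s ++ take i s)) by rewrite -hr rot_cycle.
have hu' : uniq (u :: (drop i.+1 s ++ take i s)) by rewrite -hr rot_uniq.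
have hsz : 2 < size (u :: (drop i.+1 s ++ take i s)) by rewrite -hr size_rot.
have hsub : {subset u :: (drop i.+1 s ++ take i s) <= T}.
  by move=> z; rewrite -hr mem_rot; exact: h3.
move: hc hu' hsz hsub; case: (drop i.+1 s ++ take i s) => [|a [|c r']] //= hc hu' hsz hsub.
move: hc => /and3P [ua _]; rewrite rcons_path => /andP [_ bu].
move: hu' => /and4P [_ ar _ _].
have bin : last c r' \in c :: r' by exact: mem_last.
have ab : a != last c r' by apply: contraNneq ar => ->.
have : #|[set a; last c r']| <= deg_in adj T u.
  apply/subset_leq_card/subsetP => z; rewrite !inE => /orP [] /eqP ->.
  - by rewrite hsub ?ua // !inE eqxx orbT.
  - rewrite sy bu andbT hsub //.
    by move: bin; rewrite !inE => ->; rewrite !orbT.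
by rewrite cards2 ab => h; move/(leq_trans h).
Qed.


Ltac nlia := intros; try apply/leP; repeat match goal with
  | H : is_true (_ <= _) |- _ => have := elimT leP H; clear H
  | H : is_true (_ < _) |- _ => have := elimT ltP H; clear H
  | H : (_ = _ :> nat) |- _ => move: H
  end; rewrite -?plusE -?multE -?minusE; lia.

Lemma deg1 (V : finType) (adj : rel V) w : irreflexive adj -> deg_in adj [set w] w = 0.
Proof.
move=> ir; apply/eqP; rewrite cards_eq0; apply/eqP/setP => z; rewrite !inE.
by apply/negbTE; apply/andP => [[/eqP -> ]]; rewrite ir.
Qed.

Lemma deg0 (V : finType) (adj : rel V) w : deg_in adj set0 w = 0.
Proof. by apply/eqP; rewrite cards_eq0; apply/eqP/setP => z; rewrite !inE. Qed.

Lemma nbU1 (V : finType) (adj : rel V) (X : {set V}) w :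
  symmetric adj -> irreflexive adj -> w \notin X ->
  nb adj (w |: X) (w |: X) = nb adj X X + 2 * deg_in adj X w.
Proof.
move=> sy ir wX; have d : [disjoint [set w] & X] by rewrite disjoints1.
rewrite nbUl // nb1 degU // deg1 // nbUr // (nb_sym _ _ sy) nb1; nlia.
Qed.

Definition bd (V : finType) (adj : rel V) (S : {set V}) := nb adj S (~: S).

Lemma bdU1 (V : finType) (adj : rel V) (X : {set V}) w :
  symmetric adj -> irreflexive adj -> cubic adj -> w \notin X ->
  bd adj (w |: X) + 2 * deg_in adj X w = bd adj X + 3.
Proof.
move=> sy ir cu wX; have h1 := nbI X cu; have h2 := nbI (w |: X) cu.
rewrite nbU1 // cardsU1 wX in h2; rewrite /bd; move: h2; rewrite /=; nlia.
Qed.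

Lemma degC (V : finType) (adj : rel V) (T : {set V}) u :
  cubic adj -> deg_in adj T u + deg_in adj (~: T) u = 3.
Proof.
move=> cu; rewrite -degU ?setUCr ?cu //; by rewrite disjoints_subset setCK.
Qed.

Lemma forest (V : finType) (adj : rel V) :
  symmetric adj -> irreflexive adj -> cubic adj ->
  forall n (S : {set V}), #|S| = n.+1 -> ~ has_cycle_in adj S -> n.+3 <= bd adj S.
Proof.
move=> sy ir cu; elim=> [|n IH] S cS nc.
all: case: (boolP [exists w in S, deg_in adj S w <= 1]); last first.
1,3: move=> /exists_inPn hn; exfalso; apply: nc.
1,2: have : 0 < #|S| by rewrite cS.
1,2: case/card_gt0P => x0 x0S; apply: (cyc_mindeg sy ir x0S) => z zS.
1,2: by rewrite ltnNge hn.
all: case/exists_inP => w wS dw.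
all: have eS : S = w |: (S :\ w) by rewrite setD1K.
all: have wn : w \notin S :\ w by rewrite !inE eqxx.
all: have hb := bdU1 sy ir cu wn; rewrite -eS in hb.
all: have dd : deg_in adj S w = deg_in adj (S :\ w) w
       by rewrite {1}eS degU ?deg1 ?disjoints1.
- have e0 : S :\ w = set0.
    apply/eqP; rewrite -cards_eq0; apply/eqP; move: cS; rewrite (cardsD1 w S) wS /=; nlia.

  move: hb; have b0 : bd adj set0 = 0 by rewrite /bd /nb big_set0.
  rewrite e0 deg0 b0; nlia.
- have c' : #|S :\ w| = n.+1 by move: cS; rewrite (cardsD1 w S) wS => [[]].
  have := IH _ c' (fun h => nc (cyc_sub (subD1set S w) h)).
  rewrite -dd in hb; nlia.
Qed.


Lemma cyc4 (V : finType) (adj : rel V) (S : {set V}) :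
  cyclically_4_edge_connected adj -> has_cycle_in adj S -> has_cycle_in adj (~: S) ->
  4 <= bd adj S.
Proof.
move=> c4 h1 h2; rewrite leqNgt; apply/negP => lt.
apply: (c4 S (bd adj S) lt); split=> //.
by rewrite /is_kcut neb_nb.
Qed.

Lemma corner_deg (V : finType) (adj : rel V) (T : {set V}) u z :
  symmetric adj -> irreflexive adj -> cubic adj -> cyclically_4_edge_connected adj ->
  has_cycle_in adj T -> has_cycle_in adj (~: T) -> bd adj T = 4 ->
  u \in T -> z \notin T -> adj u z -> deg_in adj T u = 2.
Proof.
move=> sy ir cu c4 hT hC bT uT zT uz.
have h3 := degC T u cu.
have h1 : 1 <= deg_in adj (~: T) u.
  rewrite /deg_in card_gt0; apply/set0Pn; exists z; by rewrite !inE zT uz.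
have : ~ deg_in adj T u <= 1.
  move=> dl.
  have hc' := cyc_avoid sy hT dl.
  have wn : u \notin T :\ u by rewrite !inE eqxx.
  have hb := bdU1 sy ir cu wn; rewrite setD1K // in hb.
  have dd : deg_in adj T u = deg_in adj (T :\ u) u
       by rewrite -{1}(setD1K uT) degU ?deg1 ?disjoints1.
  have : 4 <= bd adj (T :\ u).
    apply: cyc4 => //; apply: cyc_sub hC; apply/subsetP => t; rewrite !inE.
    by move=> tn; rewrite (negbTE tn) andbF.
  rewrite -dd in hb; nlia.
move/negP; rewrite -ltnNge => h2; nlia.
Qed.

Lemma no_double (V : finType) (adj : rel V) (X : {set V}) w :
  symmetric adj -> irreflexive adj -> cubic adj -> cyclically_4_edge_connected adj ->
  bd adj X = 4 -> has_cycle_in adj X \/ single_edge adj X -> w \notin X ->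
  2 <= deg_in adj X w -> has_cycle_in adj (~: (w |: X)) -> False.
Proof.
move=> sy ir cu c4 bX hX wX dw hC.
have hb := bdU1 sy ir cu wX.
suff : 4 <= bd adj (w |: X) by nlia.
apply: cyc4 => //.
case: hX => [hX|[a [b [ab eX]]]].
  by apply: cyc_sub hX; apply/subsetP => t ti; rewrite !inE ti orbT.
have wa : adj w a.
  apply/negPn/negP => nwa; move: dw.
  have : [set t in X | adj w t] \subset [set b].
    apply/subsetP => t; rewrite eX !inE => /andP [/orP [] /eqP -> //].
    by rewrite (negbTE nwa).
  by move/subset_leq_card; rewrite cards1 /deg_in => h1 h2; have := leq_trans h2 h1.
have wb : adj w b.
  apply/negPn/negP => nwb; move: dw.
  have : [set t in X | adj w t] \subset [set a].
    apply/subsetP => t; rewrite eX !inE => /andP [/orP [] /eqP -> //].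
    by rewrite (negbTE nwb).
  by move/subset_leq_card; rewrite cards1 /deg_in => h1 h2; have := leq_trans h2 h1.
exists [:: w; a; b]; split => //.
- rewrite /= !inE negb_or; move: wX; rewrite eX !inE negb_or => /andP [-> ->] /=.
  by rewrite andbT; apply: contraTneq ab => ->; rewrite ir.
- by move=> t; rewrite !inE eX !inE => /orP [->|/orP [->|->]]; rewrite ?orbT.
- by rewrite /= wa ab sy wb.
Qed.

Lemma single_deg (V : finType) (adj : rel V) (S : {set V}) z :
  symmetric adj -> irreflexive adj -> single_edge adj S -> z \in S -> deg_in adj S z = 1.
Proof.
move=> sy ir [a [b [ab ->]]]; rewrite !inE => /orP [] /eqP ->; rewrite /deg_in.
- suff -> : [set t in [set a; b] | adj a t] = [set b] by rewrite cards1.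
  apply/setP => t; rewrite !inE; case: (eqVneq t a) => [->|ta]; first by rewrite ir andbF; apply/esym/eqP => e; rewrite e ir in ab.
  by case: (eqVneq t b) => [->|tb] //=; rewrite andbF.
- suff -> : [set t in [set a; b] | adj b t] = [set a] by rewrite cards1.
  apply/setP => t; rewrite !inE; case: (eqVneq t b) => [->|tb]; first by rewrite ir andbF; apply/esym/eqP => e; rewrite e ir in ab.
  case: (eqVneq t a) => [->|ta] /=; first by rewrite sy ab. by [].
Qed.

Lemma two_set (V : finType) (X : {set V}) u u' z :
  #|X| = 2 -> u \in X -> u' \in X -> u != u' -> z \in X -> (z == u) || (z == u').
Proof.
move=> cX uX u'X uu zX.
have : [set u; u'] == X.
  by rewrite eqEcard cards2 uu cX leqnn andbT; apply/subsetP => t; rewrite !inE => /orP [] /eqP ->.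
by move/eqP => e; move: zX; rewrite -e !inE.
Qed.


Lemma side_edge (V : finType) (adj : rel V) (S : {set V}) :
  symmetric adj -> irreflexive adj -> cubic adj ->
  ~ has_cycle_in adj S -> bd adj S = 4 -> 0 < #|S| -> single_edge adj S.
Proof.
move=> sy ir cu nc bS.
case cS : #|S| => [|n] // _.
have hf := forest sy ir cu cS nc.
have hI := nbI S cu; rewrite -/(bd adj S) bS cS in hI.
have n1 : n = 1 by nlia.
have : 0 < nb adj S S by nlia.
rewrite /nb; case: (boolP [exists a in S, 0 < deg_in adj S a]); last first.
  move/exists_inPn => h; rewrite big1 // => a aS; move: (h a aS); by rewrite lt0n negbK => /eqP.
case/exists_inP => a aS; rewrite /deg_in card_gt0 => /set0Pn [b]; rewrite inE => /andP [bS' ab] _.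
exists a, b; split => //; apply/eqP; rewrite eq_sym eqEcard cards2 cS n1.
have -> : a != b by apply: contraTneq ab => ->; rewrite ir.
rewrite leqnn andbT; apply/subsetP => t; rewrite !inE => /orP [] /eqP -> //.
Qed.

Lemma cyc_nonempty (V : finType) (adj : rel V) (S : {set V}) :
  has_cycle_in adj S -> 0 < #|S|.
Proof.
case=> [[|a s] [h1 _ h3 _]] //; apply/card_gt0P; exists a; apply: h3; exact: mem_head.
Qed.

Unset Implicit Arguments.

Theorem mainTheorem15 (V : finType) (adj : rel V) (x y : V) :
  simple_graph adj -> cubic adj -> cyclically_4_edge_connected adj ->
  adj x y ->
  (* e = xy lies in no cyclic 4-edge-cut *)
  (forall A : {set V}, cyclic_kcut adj 4 A -> (x \in A) = (y \in A)) ->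
  (* for every cyclic 4-edge-cut E(A,B) with e in G[A], B is not solid *)
  (forall A : {set V}, cyclic_kcut adj 4 A -> x \in A -> y \in A ->
     ~ solid adj (~: A)) ->
  forall A : {set V}, cyclic_kcut adj 4 A -> x \in A -> y \in A ->
    twisted_net adj (~: A).
Proof.
move=> [sy ir] cu c4 xy _ hns.
suff H : forall n (A : {set V}), #|~: A| <= n -> cyclic_kcut adj 4 A ->
    x \in A -> y \in A -> twisted_net adj (~: A).
  by move=> A; apply: (H _ A (leqnn _)).
elim=> [|n IH] A hn hc xA yA.
  by exfalso; case: hc => _ [_ hB]; have := cyc_nonempty hB; nlia.
have ns := hns A hc xA yA.
case: hc => hk [hA hB].
have : exists B1 B2 : {set V},
      [/\ B1 :|: B2 = ~: A, [disjoint B1 & B2], 2 <= #|B1|, 2 <= #|B2|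
        & n_edges_between adj B1 B2 = 2] by apply: NNPP.
case=> B1 [B2 [eU dj c1 c2 e12]].
have mem : forall t, (t \in B1) || (t \in B2) = (t \notin A).
  by move=> t; rewrite -in_setC -eU inE.
have B1A : forall t, t \in B1 -> t \notin A by move=> t tB; rewrite -mem tB.
have B2A : forall t, t \in B2 -> t \notin A by move=> t tB; rewrite -mem tB orbT.
have d1A : [disjoint B1 & A] by rewrite disjoints_subset; apply/subsetP => t /B1A; rewrite inE.
have d2A : [disjoint B2 & A] by rewrite disjoints_subset; apply/subsetP => t /B2A; rewrite inE.
have dj' : [disjoint B2 & B1] by rewrite disjoint_sym.
have cB1 : ~: B1 = B2 :|: A.
  apply/setP => t; rewrite !inE; have := mem t; case: (boolP (t \in B1)) => tB1 /=.
    by rewrite (disjointFr dj tB1) /= => /esym /negbTE ->.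
  by move=> ->; case: (t \in A); rewrite ?orbT ?orbF.
have cB2 : ~: B2 = B1 :|: A.
  apply/setP => t; rewrite !inE; have := mem t; case: (boolP (t \in B2)) => tB2 /=.
    by rewrite (disjointFr dj' tB2) orbT /= => /esym /negbTE ->.
  by rewrite orbF => ->; case: (t \in A); rewrite ?orbT ?orbF.
have n12 : nb adj B1 B2 = 2 by rewrite -neb_nb.
have n21 : nb adj B2 B1 = 2 by rewrite nb_sym.
have bd1 : bd adj B1 = 2 + nb adj B1 A by rewrite /bd cB1 nbUr // n12.
have bd2 : bd adj B2 = 2 + nb adj B2 A by rewrite /bd cB2 nbUr // n21.
have sA : nb adj B1 A + nb adj B2 A = 4.
  by rewrite -nbUl // eU nb_sym // -neb_nb.
have hC1 : has_cycle_in adj (~: B1) by apply: cyc_sub hA; rewrite cB1 subsetUr.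
have hC2 : has_cycle_in adj (~: B2) by apply: cyc_sub hA; rewrite cB2 subsetUr.
have lb : forall S : {set V}, has_cycle_in adj (~: S) -> 2 <= #|S| -> 4 <= bd adj S.
  move=> S hS cS; case: (classic (has_cycle_in adj S)) => h; first exact: cyc4.
  case e : #|S| cS => [|m] // cS; have := forest sy ir cu e h; nlia.
have b1 : bd adj B1 = 4 by have := lb _ hC1 c1; have := lb _ hC2 c2; nlia.
have b2 : bd adj B2 = 4 by have := lb _ hC1 c1; have := lb _ hC2 c2; nlia.
have cls : forall S : {set V}, bd adj S = 4 -> 2 <= #|S| ->
    has_cycle_in adj S \/ single_edge adj S.
  move=> S bS cS; case: (classic (has_cycle_in adj S)) => h; [by left | right].
  by apply: side_edge => //; nlia.
have cl1 := cls _ b1 c1.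
have cl2 := cls _ b2 c2.
have cU : #|B1| + #|B2| = #|~: A| by rewrite -eU cardsU (disjoint_setI0 dj) cards0 subn0.
have tn : forall (S S' : {set V}), ~: S = S' :|: A -> 2 <= #|S'| -> #|S| + #|S'| = #|~: A| ->
     bd adj S = 4 -> has_cycle_in adj S -> twisted_net adj S.
  move=> S S' eS cS' cc bS hS; rewrite -(setCK S); apply: IH.
  - rewrite setCK; nlia.
  - split; first by rewrite /is_kcut setCK neb_nb nb_sym.
    split; last by rewrite setCK.
    by apply: cyc_sub hA; rewrite eS subsetUr.
  - by rewrite eS inE xA orbT.
  - by rewrite eS inE yA orbT.
move: e12; rewrite /n_edges_between => /eqP /cards2P [[u v] [[u' v'] [pq eP]]].
have F : forall a b, a \in B1 -> b \in B2 ->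
    adj a b = ((a == u) && (b == v)) || ((a == u') && (b == v')).
  move=> a b aB bB.
  have : (a, b) \in [set p : V * V | [&& p.1 \in B1, p.2 \in B2 & adj p.1 p.2]]
       = ((a, b) \in [set (u, v); (u', v')]) by rewrite eP.
  by rewrite !inE /= aB bB /= !xpair_eqE.
have : (u, v) \in [set (u, v); (u', v')] by rewrite !inE eqxx.
rewrite -eP inE /= => /and3P [uB vB uv].
have : (u', v') \in [set (u, v); (u', v')] by rewrite !inE eqxx orbT.
rewrite -eP inE /= => /and3P [u'B v'B u'v'].
have nA : forall z, z \in A -> z \notin B1 /\ z \notin B2.
  move=> z zA; split; apply: contraTN zA => h; [exact: B1A | exact: B2A].
have uu : u != u'.
  apply/negP => /eqP e; subst u'.
  have vv : v != v' by apply: contraNneq pq => ->.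
  apply: (no_double sy ir cu c4 b2 cl2 (w := u)).
  - by rewrite (disjointFr dj uB).
  - rewrite /deg_in; have <- : #|[set v; v']| = 2 by rewrite cards2 vv.
    by apply/subset_leq_card/subsetP => t; rewrite !inE => /orP [] /eqP ->; rewrite ?vB ?v'B ?uv ?u'v'.
  - apply: cyc_sub hA; apply/subsetP => t tA; have [h1 h2] := nA t tA.
    rewrite !inE negb_or h2 andbT; apply: contraNneq h1 => ->; exact: uB.
have vv : v != v'.
  apply/negP => /eqP e; subst v'.
  apply: (no_double sy ir cu c4 b1 cl1 (w := v)).
  - by rewrite (disjointFr dj' vB).
  - rewrite /deg_in; have <- : #|[set u; u']| = 2 by rewrite cards2 uu.
    by apply/subset_leq_card/subsetP => t; rewrite !inE => /orP [] /eqP ->; rewrite ?uB ?u'B sy ?uv ?u'v'.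
  - apply: cyc_sub hA; apply/subsetP => t tA; have [h1 h2] := nA t tA.
    rewrite !inE negb_or h1 andbT; apply: contraNneq h2 => ->; exact: vB.
have nvB1 : v \notin B1 by rewrite (disjointFr dj' vB).
have nv'B1 : v' \notin B1 by rewrite (disjointFr dj' v'B).
have nuB2 : u \notin B2 by rewrite (disjointFr dj uB).
have nu'B2 : u' \notin B2 by rewrite (disjointFr dj u'B).
have cor1 : has_cycle_in adj B1 -> corner adj B1 u /\ corner adj B1 u'.
  move=> h; rewrite /corner uB u'B.
  by rewrite (corner_deg sy ir cu c4 h hC1 b1 uB nvB1 uv) (corner_deg sy ir cu c4 h hC1 b1 u'B nv'B1 u'v').
have cor2 : has_cycle_in adj B2 -> corner adj B2 v /\ corner adj B2 v'.
  move=> h; rewrite /corner vB v'B.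
  have vu : adj v u by rewrite sy.
  have v'u' : adj v' u' by rewrite sy.
  by rewrite (corner_deg sy ir cu c4 h hC2 b2 vB nuB2 vu) (corner_deg sy ir cu c4 h hC2 b2 v'B nu'B2 v'u').
have F' : forall a b, a \in B2 -> b \in B1 ->
    adj a b = ((a == v) && (b == u)) || ((a == v') && (b == u')).
  by move=> a b aB bB; rewrite sy F // (andbC (b == u)) (andbC (b == u')).
rewrite -eU.
case: cl1 => [h1|s1].
  apply: (TN_join (u := u) (u' := u') (v := v) (v' := v')) => //.
  - exact: (tn B1 B2 cB1 c2 cU b1 h1).
  - case: cl2 => [h2|s2]; last by right.
    left; have [k1 k2] := cor2 h2; split => //.
    by apply: (tn B2 B1 cB2 c1 _ b2 h2); rewrite addnC.
  - by case: (cor1 h1).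
  - by case: (cor1 h1).
case: cl2 => [h2|s2].
  rewrite setUC.
  apply: (TN_join (u := v) (u' := v') (v := u) (v' := u')) => //.
  - by apply: (tn B2 B1 cB2 c1 _ b2 h2); rewrite addnC.
  - by right.
  - by case: (cor2 h2).
  - by case: (cor2 h2).
have cs : forall S : {set V}, single_edge adj S -> #|S| = 2.
  move=> S [a [b [ab ->]]]; rewrite cards2; case: (eqVneq a b) => // e.
  by rewrite e ir in ab.
have s1c := cs _ s1; have s2c := cs _ s2.
have dg : forall (S : {set V}) w w0, (forall t, t \in S -> adj w t = (t == w0)) -> w0 \in S ->
    deg_in adj S w = 1.
  move=> S w w0 ht w0S; rewrite /deg_in; suff -> : [set t in S | adj w t] = [set w0] by rewrite cards1.
  apply/setP => t.
  rewrite !inE; case tS: (t \in S) => /=; first exact: ht.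
  by apply/esym/negbTE; apply: contraFneq tS => ->.
apply: TN_cycle.
  by rewrite cardsU (disjoint_setI0 dj) cards0 subn0 s1c s2c.
move=> z; rewrite inE => /orP [] zB; rewrite degU //.
- rewrite (single_deg sy ir s1 zB).
  case/orP: (two_set s1c uB u'B uu zB) => /eqP ->.
  + by rewrite (dg _ _ v) // => t tB; rewrite F // eqxx (negbTE uu) orbF.
  + by rewrite (dg _ _ v') // => t tB; rewrite F // eqxx eq_sym (negbTE uu).
- rewrite (single_deg sy ir s2 zB).
  case/orP: (two_set s2c vB v'B vv zB) => /eqP ->.
  + by rewrite (dg _ _ u) // => t tB; rewrite F' // eqxx (negbTE vv) orbF.
  + by rewrite (dg _ _ u') // => t tB; rewrite F' // eqxx eq_sym (negbTE vv).
Qed.
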